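(* For every formula $F$ of $\mathcal{L}$: if $F$ is valid in every neighbourhood model, then $F$ is derivable in the axiom system of $\mathbb{PCL}$.
   Context: Formulas: $\mathcal{L} ::= p \mid \bot \mid A\wedge B \mid A\lor B \mid A\rightarrow B \mid A>B$. The axiom system of $\mathbb{PCL}$ is classical propositional logic plus the rules (RCEA) from $A\leftrightarrow B$ infer $(A>C)\leftrightarrow(B>C)$; (RCK) from $A\rightarrow B$ infer $(C>A)\rightarrow(C>B)$, and the axioms (ID) $A>A$; (R-And) $(A>B)\wedge(A>C)\rightarrow(A>(B\wedge C))$; (CM) $(A>B)\wedge(A>C)\rightarrow((A\wedge B)>C)$; (OR) $(A>C)\wedge(B>C)\rightarrow((A\lor B)>C)$. A neighbourhood model is $\langle W,N,\llbracket\cdot\rrbracket\rangle$ with $W\neq\emptyset$, $N:W\to\mathcal{P}(\mathcal{P}(W))$ such that every $\alpha\in N(x)$ is non-empty, and a valuation of atoms. Forcing is classical for Boolean connectives, and $x\Vdash A>B$ iff for all $\alpha\in N(x)$, if some $y\in\alpha$ forces $A$, then there is $\beta\in N(x)$ with $\beta\subseteq\alpha$ such that some $y\in\beta$ forces $A$ and every $y\in\beta$ forces $A\to B$. Valid = forced at every world. *)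

(* Defs.v *)
From Stdlib Require Import Bool.

Inductive form : Type :=
| Atom : nat -> form
| Bot : form
| And : form -> form -> form
| Or : form -> form -> form
| Imp : form -> form -> form
| Cond : form -> form -> form.

Definition Iff (A B : form) : form := And (Imp A B) (Imp B A).

(* Classical propositional logic: every substitution instance of a
   propositional tautology is an axiom.  A formula is such an instance iff
   it is true under every Boolean valuation that is classical on the
   Boolean connectives (treating atoms and conditionals A > B as
   propositional letters). *)
Definition classical_valuation (v : form -> bool) : Prop :=
  v Bot = false /\
  (forall A B, v (And A B) = v A && v B) /\
  (forall A B, v (Or A B) = v A || v B) /\
  (forall A B, v (Imp A B) = implb (v A) (v B)).

Definition tautology (F : form) : Prop :=
  forall v, classical_valuation v -> v F = true.

Inductive PCL : form -> Prop :=
| PCL_taut F : tautology F -> PCL F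
| PCL_MP A B : PCL (Imp A B) -> PCL A -> PCL B
| PCL_RCEA A B C : PCL (Iff A B) -> PCL (Iff (Cond A C) (Cond B C))
| PCL_RCK A B C : PCL (Imp A B) -> PCL (Imp (Cond C A) (Cond C B))
| PCL_ID A : PCL (Cond A A)
| PCL_RAnd A B C :
    PCL (Imp (And (Cond A B) (Cond A C)) (Cond A (And B C)))
| PCL_CM A B C :
    PCL (Imp (And (Cond A B) (Cond A C)) (Cond (And A B) C))
| PCL_OR A B C :
    PCL (Imp (And (Cond A C) (Cond B C)) (Cond (Or A B) C)).

Record nmodel : Type := {
  world : Type;
  world_inhabited : inhabited world;
  nbhd : world -> (world -> Prop) -> Prop;
  nbhd_nonempty : forall x alpha, nbhd x alpha -> exists y, alpha y;
  val : nat -> world -> Prop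
}.

Fixpoint forces (M : nmodel) (x : world M) (F : form) {struct F} : Prop :=
  match F with
  | Atom p => val M p x
  | Bot => False
  | And A B => forces M x A /\ forces M x B
  | Or A B => forces M x A \/ forces M x B
  | Imp A B => forces M x A -> forces M x B
  | Cond A B =>
      forall alpha, nbhd M x alpha ->
        (exists y, alpha y /\ forces M y A) ->
        exists beta, nbhd M x beta /\ (forall z, beta z -> alpha z) /\
          (exists y, beta y /\ forces M y A) /\
          (forall y, beta y -> forces M y A -> forces M y B)
  end.

Definition valid (F : form) : Prop :=
  forall (M : nmodel) (x : world M), forces M x F.

(* Main.v *)
Require Import Defs.
From Stdlib Require Import Bool List Arith Lia Classical Cantor.
Import ListNotations.

Definition Neg (A : form) : form := Imp A Bot.
Definition Top : form := Imp Bot Bot.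
Fixpoint conj (L : list form) : form :=
  match L with [] => Top | a :: L => And a (conj L) end.

Ltac taut :=
  let v := fresh "v" in let Hv := fresh "Hv" in
  let H0 := fresh "H0" in let HA := fresh "HA" in
  let HO := fresh "HO" in let HI := fresh "HI" in
  unfold tautology; intros v Hv; destruct Hv as (H0 & HA & HO & HI);
  simpl conj in *; unfold Iff, Neg, Top in *;
  repeat first [rewrite HI | rewrite HA | rewrite HO | rewrite H0];
  repeat match goal with |- context [v ?X] => destruct (v X) end; reflexivity.

Lemma taut_mp X Y : tautology (Imp X Y) -> PCL X -> PCL Y.
Proof. intros H1 H2. eapply PCL_MP; [apply PCL_taut; exact H1| exact H2]. Qed.

Lemma taut_mp2 X Y Z : tautology (Imp X (Imp Y Z)) -> PCL X -> PCL Y -> PCL Z.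
Proof. intros H1 H2 H3. eapply PCL_MP; [eapply PCL_MP; [apply PCL_taut; exact H1| exact H2]|exact H3]. Qed.

Lemma conj_true v L : classical_valuation v ->
  (v (conj L) = true <-> forall y, In y L -> v y = true).
Proof.
  intros Hv. destruct Hv as (H0 & HA & HO & HI).
  induction L as [|a L IH]; simpl.
  - unfold Top; rewrite HI, H0. split; [intros _ y []|reflexivity].
  - rewrite HA, andb_true_iff, IH. split.
    + intros [Ha Hl] y [<-|Hy]; auto.
    + intros H; split; auto.
Qed.

Definition Cons (G : form -> Prop) : Prop :=
  forall L, (forall y, In y L -> G y) -> ~ PCL (Imp (conj L) Bot).

Definition MCS (G : form -> Prop) : Prop := Cons G /\ forall A, G A \/ G (Neg A).

Lemma Cons_sub (G H : form -> Prop) : (forall y, H y -> G y) -> Cons G -> Cons H.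
Proof. intros Hs HG L HL. apply HG. intros y Hy; apply Hs, HL, Hy. Qed.

Lemma split_list (P : form -> Prop) a L :
  (forall y, In y L -> P y \/ y = a) ->
  exists L', (forall y, In y L' -> P y) /\ (forall y, In y L -> In y L' \/ y = a).
Proof.
  induction L as [|b L IH]; intros H.
  - exists []. split; [intros y []| intros y []].
  - destruct IH as (L' & H1 & H2). { intros y Hy; apply H; right; exact Hy. }
    destruct (H b (or_introl eq_refl)) as [Hb|Hb].
    + exists (b :: L'). split.
      * intros y [<-|Hy]; auto.
      * intros y [<-|Hy]; [left; left; reflexivity|]. destruct (H2 y Hy); [left; right|right]; auto.
    + exists L'. split; auto. intros y [<-|Hy]; auto.
Qed.

Lemma conj_sub_taut L L' a :
  (forall y, In y L -> In y L' \/ y = a) ->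
  tautology (Imp (Imp (conj L) Bot) (Imp (conj L') (Neg a))).
Proof.
  intros H v Hv. pose proof (conj_true v L Hv) as C1. pose proof (conj_true v L' Hv) as C2.
  destruct Hv as (H0 & HA & HO & HI). unfold Neg. rewrite !HI, H0.
  destruct (v (conj L')) eqn:E2; [|destruct (v (conj L)); reflexivity].
  destruct (v a) eqn:Ea; [|destruct (v (conj L)); reflexivity].
  assert (v (conj L) = true) as ->.
  { apply C1. intros y Hy. destruct (H y Hy) as [Hy' | ->]; [apply C2; auto| exact Ea]. }
  reflexivity.
Qed.

Lemma conj_incl L L' : (forall y, In y L -> In y L') -> tautology (Imp (conj L') (conj L)).
Proof.
  intros H v Hv. pose proof (conj_true v L Hv) as C1. pose proof (conj_true v L' Hv) as C2.
  destruct Hv as (H0 & HA & HO & HI). rewrite !HI.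
  destruct (v (conj L')) eqn:E1; [|reflexivity].
  assert (v (conj L) = true) as ->; [|reflexivity].
  apply C1. intros y Hy. apply C2; auto.
Qed.

Lemma cons_ext G A : Cons G ->
  Cons (fun y => G y \/ y = A) \/ Cons (fun y => G y \/ y = Neg A).
Proof.
  intros HG. apply NNPP. intros Hn. apply not_or_and in Hn as [H1 H2].
  apply not_all_ex_not in H1 as [L1 H1]. apply imply_to_and in H1 as [HL1 P1]. apply NNPP in P1.
  apply not_all_ex_not in H2 as [L2 H2]. apply imply_to_and in H2 as [HL2 P2]. apply NNPP in P2.
  destruct (split_list G A L1 HL1) as (L1' & S1 & T1).
  destruct (split_list G (Neg A) L2 HL2) as (L2' & S2 & T2).
  pose proof (taut_mp _ _ (conj_sub_taut _ _ _ T1) P1) as Q1.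
  pose proof (taut_mp _ _ (conj_sub_taut _ _ _ T2) P2) as Q2.
  apply (HG (L1' ++ L2')).
  - intros y Hy; apply in_app_or in Hy as [Hy|Hy]; auto.
  - assert (tautology (Imp (Imp (conj L1') (Neg A)) (Imp (Imp (conj L2') (Neg (Neg A)))
       (Imp (Imp (conj (L1' ++ L2')) (conj L1')) (Imp (Imp (conj (L1' ++ L2')) (conj L2')) (Imp (conj (L1' ++ L2')) Bot)))))) as T'.
    { clear. taut. }
    apply (taut_mp2 _ _ _ T' Q1) in Q2.
    eapply PCL_MP; [eapply PCL_MP; [exact Q2|]|]; apply PCL_taut, conj_incl;
      intros y Hy; apply in_or_app; auto.
Qed.

Opaque to_nat of_nat.
Fixpoint enc (A : form) : nat :=
  match A with
  | Atom p => to_nat (0, p)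
  | Bot => to_nat (1, 0)
  | And A B => to_nat (2, to_nat (enc A, enc B))
  | Or A B => to_nat (3, to_nat (enc A, enc B))
  | Imp A B => to_nat (4, to_nat (enc A, enc B))
  | Cond A B => to_nat (5, to_nat (enc A, enc B))
  end.

Fixpoint dec (f n : nat) : form :=
  match f with
  | 0 => Bot
  | S f =>
    let (t, r) := of_nat n in
    let (a, b) := of_nat r in
    match t with
    | 0 => Atom r
    | 1 => Bot
    | 2 => And (dec f a) (dec f b)
    | 3 => Or (dec f a) (dec f b)
    | 4 => Imp (dec f a) (dec f b)
    | _ => Cond (dec f a) (dec f b)
    end
  end.

Lemma dec_enc A : forall f, enc A < f -> dec f (enc A) = A.
Proof.
  induction A; intros f Hf; destruct f as [|f]; try lia; simpl dec; simpl enc;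
  rewrite cancel_of_to.
  1: destruct (of_nat n); reflexivity.
  1: destruct (of_nat 0); reflexivity.
  all: simpl enc in Hf;
    pose proof (to_nat_non_decreasing (enc A1) (enc A2));
    match type of Hf with to_nat (?k, ?r) < _ => pose proof (to_nat_non_decreasing k r) end;
    rewrite cancel_of_to, IHA1, IHA2 by lia; reflexivity.
Qed.

Definition enum (n : nat) : form := dec (S n) n.
Lemma enum_surj A : enum (enc A) = A.
Proof. apply dec_enc. lia. Qed.

Fixpoint chain (G : form -> Prop) (n : nat) : form -> Prop :=
  match n with
  | 0 => G
  | S n => fun y => chain G n y \/
      (Cons (fun z => chain G n z \/ z = enum n) /\ y = enum n) \/
      (~ Cons (fun z => chain G n z \/ z = enum n) /\ y = Neg (enum n))
  end.

Lemma chain_cons G n : Cons G -> Cons (chain G n).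
Proof.
  intros HG; induction n as [|n IH]; simpl; auto.
  destruct (classic (Cons (fun z => chain G n z \/ z = enum n))) as [Hc|Hc].
  - eapply Cons_sub; [|exact Hc]. simpl. intros y [Hy|[[_ Hy]|[Hn _]]]; auto. contradiction.
  - destruct (cons_ext _ (enum n) IH) as [H|H]; [contradiction|].
    eapply Cons_sub; [|exact H]. simpl. intros y [Hy|[[Hn _]|[_ Hy]]]; auto. contradiction.
Qed.

Lemma chain_mono G n m y : n <= m -> chain G n y -> chain G m y.
Proof. induction 1; simpl; auto. Qed.

Lemma lindenbaum G : Cons G -> exists D, MCS D /\ forall y, G y -> D y.
Proof.
  intros HG. exists (fun y => exists n, chain G n y). split; [split|].
  - intros L HL. assert (exists n, forall y, In y L -> chain G n y) as [n Hn].
    { clear HG. induction L as [|a L IH].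
      - exists 0; intros y [].
      - destruct IH as [n Hn]. { intros y Hy; apply HL; right; auto. }
        destruct (HL a (or_introl eq_refl)) as [k Hk].
        exists (max n k). intros y [<-|Hy].
        + eapply chain_mono; [|exact Hk]. lia.
        + eapply chain_mono; [|apply Hn; exact Hy]. lia. }
    apply (chain_cons G n HG L Hn).
  - intros A. pose proof (enum_surj A) as E.
    destruct (classic (Cons (fun z => chain G (enc A) z \/ z = enum (enc A)))) as [Hc|Hc].
    + left. exists (S (enc A)). simpl. right; left. split; [exact Hc| rewrite E; reflexivity].
    + right. exists (S (enc A)). simpl. right; right. split; [exact Hc| rewrite E; reflexivity].
  - intros y Hy. exists 0. exact Hy.
Qed.

Lemma mcs_closed G L B : MCS G -> (forall y, In y L -> G y) -> PCL (Imp (conj L) B) -> G B.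
Proof.
  intros [HC HM] HL HP. destruct (HM B) as [H|H]; auto. exfalso.
  apply (HC (Neg B :: L)).
  - intros y [<-|Hy]; auto.
  - eapply taut_mp; [|exact HP]. taut.
Qed.

Lemma mcs_thm G B : MCS G -> PCL B -> G B.
Proof. intros HG HB. apply (mcs_closed G [] B HG); [intros y []|]. eapply taut_mp; [|exact HB]. taut. Qed.

Lemma mcs_mp G A B : MCS G -> G (Imp A B) -> G A -> G B.
Proof.
  intros HG H1 H2. apply (mcs_closed G [Imp A B; A] B HG).
  - intros y [<-|[<-|[]]]; auto.
  - apply PCL_taut. taut.
Qed.

Lemma mcs_and G A B : MCS G -> G A -> G B -> G (And A B).
Proof.
  intros HG H1 H2. apply (mcs_closed G [A; B] _ HG).
  - intros y [<-|[<-|[]]]; auto.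
  - apply PCL_taut. taut.
Qed.

Lemma mcs_bot G : MCS G -> ~ G Bot.
Proof. intros [HC _] H. apply (HC [Bot]); [intros y [<-|[]]; auto|]. apply PCL_taut; taut. Qed.

Lemma mcs_neg G A : MCS G -> G (Neg A) -> ~ G A.
Proof. intros HG H1 H2. apply (mcs_bot G HG). exact (mcs_mp G _ _ HG H1 H2). Qed.

Lemma mcs_taut1 G A B : MCS G -> tautology (Imp A B) -> G A -> G B.
Proof. intros HG T H. eapply mcs_mp; eauto. apply mcs_thm; auto. apply PCL_taut; auto. Qed.

Lemma mcs_taut2 G A B C : MCS G -> tautology (Imp A (Imp B C)) -> G A -> G B -> G C.
Proof. intros HG T H1 H2. eapply mcs_mp; eauto. eapply mcs_taut1; eauto. Qed.

Lemma mcs_andE G A B : MCS G -> G (And A B) -> G A /\ G B.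
Proof. intros HG H; split; eapply mcs_taut1; eauto; taut. Qed.

Lemma mcs_orE G A B : MCS G -> G (Or A B) -> G A \/ G B.
Proof.
  intros HG H. destruct (proj2 HG A) as [H1|H1]; auto.
  right. apply (mcs_taut2 G (Or A B) (Neg A) B HG); [taut|exact H|exact H1].
Qed.

Lemma mcs_orI1 G A B : MCS G -> G A -> G (Or A B).
Proof. intros HG H; eapply mcs_taut1; eauto; taut. Qed.
Lemma mcs_orI2 G A B : MCS G -> G B -> G (Or A B).
Proof. intros HG H; eapply mcs_taut1; eauto; taut. Qed.

Lemma mcs_impI G A B : MCS G -> (G A -> G B) -> G (Imp A B).
Proof.
  intros HG H. destruct (proj2 HG A) as [H1|H1].
  - apply (mcs_taut1 G B); auto. taut.
  - apply (mcs_taut1 G (Neg A)); auto. taut.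
Qed.

Lemma mcs_notnot G A : MCS G -> ~ G A -> G (Neg A).
Proof. intros HG H. destruct (proj2 HG A); tauto. Qed.

Fixpoint v0 (F : form) : bool :=
  match F with
  | Atom _ => false | Bot => false
  | And A B => v0 A && v0 B | Or A B => v0 A || v0 B
  | Imp A B => implb (v0 A) (v0 B) | Cond _ _ => true
  end.

Lemma v0_sound F : PCL F -> v0 F = true.
Proof.
  induction 1; simpl; auto.
  - apply H. repeat split; reflexivity.
  - simpl in IHPCL1. rewrite IHPCL2 in IHPCL1. exact IHPCL1.
Qed.

Lemma mcs_exists : exists G, MCS G.
Proof.
  destruct (lindenbaum (fun _ => False)) as [D [HD _]]; eauto.
  intros L HL HP. apply v0_sound in HP. destruct L as [|a L].
  - discriminate.
  - destruct (HL a (or_introl eq_refl)).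
Qed.

Ltac ptaut := apply PCL_taut; taut.

Definition nm (x : form -> Prop) A B := x (Cond A B).
Definition normal (x m : form -> Prop) A := forall B, nm x A B -> m B.
Definition le (x : form -> Prop) D C := nm x (Or D C) D.

Lemma c_ref x A : MCS x -> nm x A A.
Proof. unfold nm in *. intros Hx. apply mcs_thm; auto. apply PCL_ID. Qed.

Lemma c_rw x A B B' : MCS x -> PCL (Imp B B') -> nm x A B -> nm x A B'.
Proof. unfold nm in *. intros Hx HP H. eapply mcs_mp; eauto. apply mcs_thm; auto. apply PCL_RCK; auto. Qed.

Lemma c_rwT x A B B' : MCS x -> tautology (Imp B B') -> nm x A B -> nm x A B'.
Proof. intros Hx HP H. eapply c_rw; eauto. apply PCL_taut; auto. Qed.

Lemma c_lle x A A' B : MCS x -> PCL (Iff A A') -> nm x A B -> nm x A' B.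
Proof. unfold nm in *.
  intros Hx HP H. pose proof (mcs_thm x _ Hx (PCL_RCEA _ _ B HP)) as H1.
  unfold Iff in H1. apply mcs_andE in H1 as [H1 _]; auto. eapply mcs_mp; eauto.
Qed.

Lemma c_lleT x A A' B : MCS x -> tautology (Iff A A') -> nm x A B -> nm x A' B.
Proof. intros Hx HP H. eapply c_lle; eauto. apply PCL_taut; auto. Qed.

Lemma c_and x A B C : MCS x -> nm x A B -> nm x A C -> nm x A (And B C).
Proof. unfold nm in *. intros Hx H1 H2. eapply mcs_mp; [auto| apply mcs_thm; [auto|apply PCL_RAnd]|]. apply mcs_and; auto. Qed.

Lemma c_cm x A B C : MCS x -> nm x A B -> nm x A C -> nm x (And A B) C.
Proof. unfold nm in *. intros Hx H1 H2. eapply mcs_mp; [auto| apply mcs_thm; [auto|apply PCL_CM]|]. apply mcs_and; auto. Qed.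

Lemma c_or x A B C : MCS x -> nm x A C -> nm x B C -> nm x (Or A B) C.
Proof. unfold nm in *. intros Hx H1 H2. eapply mcs_mp; [auto| apply mcs_thm; [auto|apply PCL_OR]|]. apply mcs_and; auto. Qed.

Lemma c_cut x A B C : MCS x -> nm x A B -> nm x (And A B) C -> nm x A C.
Proof.
  intros Hx H1 H2.
  assert (nm x (And A B) (Imp B C)) as H3 by (eapply c_rwT; eauto; taut).
  assert (nm x (And A (Neg B)) (Imp B C)) as H4 by (eapply c_rwT; [auto| |apply c_ref; auto]; taut).
  pose proof (c_or _ _ _ _ Hx H3 H4) as H5.
  apply (c_lleT _ _ A) in H5; auto; [|taut].
  pose proof (c_and _ _ _ _ Hx H1 H5) as H6. eapply c_rwT; eauto. taut.
Qed.

Lemma c_l4 x A B X : MCS x -> nm x A B -> nm x (Or A X) (Imp A B).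
Proof.
  intros Hx H.
  assert (nm x A (Imp A B)) as H1 by (eapply c_rwT; eauto; taut).
  assert (nm x (And X (Neg A)) (Imp A B)) as H2 by (eapply c_rwT; [auto| |apply c_ref; auto]; taut).
  pose proof (c_or _ _ _ _ Hx H1 H2) as H3. eapply c_lleT; eauto. taut.
Qed.

Lemma c_lift x m D X : MCS x -> normal x m D -> nm x X D -> PCL (Imp D X) -> normal x m X.
Proof.
  intros Hx Hn H1 HP E H2. apply Hn. pose proof (c_cm _ _ _ _ Hx H1 H2) as H3.
  eapply c_lle; eauto. eapply taut_mp; [|exact HP]. taut.
Qed.

Lemma c_keyS x a b g : MCS x -> le x a b -> le x b g -> nm x (Or a (Or b g)) a.
Proof.
  unfold le. intros Hx H1 H2.
  assert (nm x (Or b g) (Or a b)) as H3 by (eapply c_rwT; eauto; taut).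
  pose proof (c_or _ _ _ _ Hx (c_ref x (Or a b) Hx) H3) as H4.
  apply (c_lleT _ _ (Or a (Or b g))) in H4; auto; [|taut].
  eapply c_cut; eauto. eapply c_lleT; eauto. taut.
Qed.

Lemma c_trans x a b g : MCS x -> le x a b -> le x b g -> le x a g.
Proof.
  intros Hx H1 H2. pose proof (c_keyS _ _ _ _ Hx H1 H2) as H3.
  assert (nm x (Or a (Or b g)) (Or a g)) as H4 by (eapply c_rwT; eauto; taut).
  pose proof (c_cm _ _ _ _ Hx H4 H3) as H5. unfold le. eapply c_lleT; eauto. taut.
Qed.

Lemma c_l3 x m a b g : MCS x -> MCS m -> le x a b -> le x b g -> normal x m a -> m g -> m b.
Proof.
  intros Hx Hm H1 H2 Hn Hg. pose proof (c_keyS _ _ _ _ Hx H1 H2) as H3.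
  assert (nm x (And a (Neg g)) (Imp g b)) as H4 by (eapply c_rwT; [auto| |apply c_ref; auto]; taut).
  assert (nm x (Or b g) (Imp g b)) as H5 by (eapply c_rwT; [auto| |exact H2]; taut).
  pose proof (c_or _ _ _ _ Hx H4 H5) as H6.
  apply (c_lleT _ _ (Or a (Or b g))) in H6; auto; [|taut].
  pose proof (c_cm _ _ _ _ Hx H3 H6) as H7.
  apply (c_lleT _ _ a) in H7; auto; [|taut].
  apply Hn in H7. eapply mcs_mp; eauto.
Qed.

Lemma c_conj x A L : MCS x -> (forall y, In y L -> nm x A y) -> nm x A (conj L).
Proof.
  intros Hx. induction L as [|b L IH]; intros H; simpl.
  - eapply c_rwT; [auto| |apply c_ref; auto]. taut.
  - apply c_and; auto; [apply H; left; auto|]. apply IH. intros y Hy; apply H; right; auto.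
Qed.

Lemma exist_normal x A B : MCS x -> ~ nm x A B -> exists m, MCS m /\ normal x m A /\ ~ m B.
Proof.
  intros Hx HnB.
  destruct (lindenbaum (fun y => nm x A y \/ y = Neg B)) as [m [Hm Hsub]].
  - intros L HL HP. destruct (split_list _ _ _ HL) as (L' & S1 & T1).
    pose proof (taut_mp _ _ (conj_sub_taut _ _ _ T1) HP) as Q.
    apply HnB. apply (c_rw _ _ (conj L')); auto.
    + eapply taut_mp; [|exact Q]. taut.
    + apply c_conj; auto.
  - exists m. split; auto. split.
    + intros C HC. apply Hsub; auto.
    + apply mcs_neg; auto.
Qed.

Definition mcs := {G : form -> Prop | MCS G}.
Definition World := (mcs * form)%type.
Definition Wm (w : World) : form -> Prop := proj1_sig (fst w).
Lemma Wm_mcs (w : World) : MCS (Wm w).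
Proof. exact (proj2_sig (fst w)). Qed.

Definition state x (s : World) := normal x (Wm s) (snd s).
Definition prec x (t s : World) := le x (snd t) (snd s) /\ ~ Wm t (snd s).
Definition cone x (s t : World) := state x t /\ (t = s \/ prec x t s).
Definition Nb (w : World) (al : World -> Prop) :=
  exists s, state (Wm w) s /\ forall t, al t <-> cone (Wm w) s t.

Lemma Nb_ne : forall w al, Nb w al -> exists y, al y.
Proof. intros w al [s [Hs H]]. exists s. apply H. split; auto. Qed.

Lemma World_inh : inhabited World.
Proof. destruct mcs_exists as [G HG]. exact (inhabits (exist _ G HG, Bot)). Qed.

Definition CM : nmodel :=
  {| world := World; world_inhabited := World_inh; nbhd := Nb; nbhd_nonempty := Nb_ne;
     val := fun p w => Wm w (Atom p) |}.

Lemma prec_trans x v u t : MCS x -> state x v -> prec x v u -> prec x u t -> prec x v t.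
Proof.
  intros Hx Hv [H1 H2] [H3 H4]. split.
  - eapply c_trans; eauto.
  - intros H. apply H2. eapply (c_l3 x (Wm v)); eauto. apply Wm_mcs.
Qed.

Lemma cone_trans x s t v : MCS x -> cone x s t -> cone x t v -> cone x s v.
Proof.
  intros Hx [Ht [->|Hts]] [Hv [->|Hvt]]; split; auto.
  right; eapply prec_trans; eauto.
Qed.

Lemma le_self x A b : MCS x -> le x (Or A b) b.
Proof. intros Hx. unfold le. eapply c_lleT; [auto| |apply c_ref; auto]. taut. Qed.

Lemma smooth x t A : MCS x -> state x t -> Wm t A ->
  exists u, state x u /\ (u = t \/ prec x u t) /\ Wm u A /\
    (forall v, state x v -> prec x v u -> ~ Wm v A).
Proof.
  intros Hx Ht HA. destruct t as [tm b].
  destruct (classic (nm x (Or A b) b)) as [H|H].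
  - exists (tm, b). split; auto. split; auto. split; auto.
    intros v Hv [H1 H2] HvA. simpl in *. apply H2.
    apply (c_l3 x (Wm v) (snd v) b (Or A b)); auto.
    + apply Wm_mcs.
    + unfold le. eapply c_lleT; eauto. taut.
    + apply mcs_orI1; auto. apply Wm_mcs.
  - destruct (exist_normal x _ _ Hx H) as (n & Hn & Hnn & Hnb).
    exists (exist _ n Hn, Or A b).
    assert (n A) as HnA.
    { destruct (mcs_orE n A b Hn) as [?|?]; auto. apply Hnn, c_ref; auto. contradiction. }
    split; [exact Hnn|]. split; [right; split; [apply le_self; auto| exact Hnb]|].
    split; [exact HnA|].
    intros v Hv [H1 H2] HvA. apply H2. apply mcs_orI1; auto. apply Wm_mcs.
Qed.

Lemma lemM x u A B : MCS x -> state x u -> Wm u A ->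
  (forall v, state x v -> prec x v u -> ~ Wm v A) -> nm x A B -> Wm u B.
Proof.
  intros Hx Hu HA Hmin HAB. destruct u as [um b].
  destruct (classic (nm x (Or A b) b)) as [H|H].
  - assert (normal x (Wm (um, b)) (Or A b)) as Hn.
    { apply (c_lift x _ b (Or A b)); auto. ptaut. }
    pose proof (Hn _ (c_l4 _ _ _ b Hx HAB)) as HI.
    eapply mcs_mp; eauto. apply Wm_mcs.
  - destruct (exist_normal x _ _ Hx H) as (n & Hn & Hnn & Hnb).
    exfalso. apply (Hmin (exist _ n Hn, Or A b)).
    + exact Hnn.
    + split; [apply le_self; auto| exact Hnb].
    + simpl. unfold Wm; simpl. destruct (mcs_orE n A b Hn) as [?|?]; auto. apply Hnn, c_ref; auto. contradiction.
Qed.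

Lemma truth F : forall w : World, forces CM w F <-> Wm w F.
Proof.
  induction F as [p| |A IHA B IHB|A IHA B IHB|A IHA B IHB|A IHA B IHB]; intros w; simpl.
  - tauto.
  - split; [tauto|]. apply mcs_bot, Wm_mcs.
  - rewrite IHA, IHB. split.
    + intros [? ?]; apply mcs_and; auto; apply Wm_mcs.
    + intros H; apply mcs_andE; auto; apply Wm_mcs.
  - rewrite IHA, IHB. split.
    + intros [?|?]; [apply mcs_orI1|apply mcs_orI2]; auto; apply Wm_mcs.
    + intros H; apply mcs_orE; auto; apply Wm_mcs.
  - rewrite IHA, IHB. split.
    + intros H; apply mcs_impI; auto; apply Wm_mcs.
    + intros H H1; eapply mcs_mp; eauto; apply Wm_mcs.
  - pose proof (Wm_mcs w) as Hx. set (x := Wm w) in *. split.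
    + intros Hf. apply NNPP. intros HnB.
      destruct (exist_normal x _ _ Hx HnB) as (m & Hm & Hmn & HmB).
      set (s := (exist _ m Hm, A) : World).
      assert (state x s) as Hs by exact Hmn.
      destruct (Hf (cone x s)) as (be & Hbe & Hsub & (y & Hy & HyA) & Hall).
      * exists s. split; auto. intros t; tauto.
      * exists s. split; [split; auto|]. apply IHA. unfold Wm; simpl. apply Hmn, c_ref; auto.
      * pose proof (Hall y Hy HyA) as HyB. apply IHB in HyB. apply IHA in HyA.
        destruct (Hsub y Hy) as [_ [->|[_ Hp]]].
        -- apply HmB. exact HyB.
        -- apply Hp. exact HyA.
    + intros HAB al [s [Hs Hal]] [y [Hy HyA]]. apply IHA in HyA.
      pose proof (proj1 (Hal y) Hy) as Hsy.
      destruct (smooth x y A Hx (proj1 Hsy) HyA) as (u & Hu & Huy & HuA & Hmin).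
      assert (cone x s u) as Hsu.
      { eapply cone_trans; eauto. split; auto. }
      exists (cone x u). split; [|split; [|split]].
      * exists u. split; auto. intros t; tauto.
      * intros z Hz. apply Hal. eapply cone_trans; eauto.
      * exists u. split; [split; auto|]. apply IHA; auto.
      * intros z [Hz [->|Hp]] HzA; apply IHA in HzA.
        -- apply IHB. eapply lemM; eauto.
        -- exfalso. eapply Hmin; eauto.
Qed.

Theorem mainTheorem2 : forall F : form, valid F -> PCL F.
Proof.
  intros F HF. apply NNPP. intros HnP.
  destruct (lindenbaum (fun y => y = Neg F)) as [G [HG Hsub]].
  - intros L HL HP. apply HnP.
    assert (forall y, In y L -> In y [] \/ y = Neg F) as T by (intros y Hy; right; auto).
    pose proof (taut_mp _ _ (conj_sub_taut _ _ _ T) HP) as Q.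
    refine (taut_mp _ _ _ Q). taut.
  - pose proof (HF CM (exist _ G HG, Bot)) as H. apply truth in H.
    apply (mcs_neg G F HG); auto.
Qed.
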